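(* Let a countable group $G$ act on a set $X$, let $\Phi=(\ell,\phi,\mathcal{Z},\Gamma,\mathcal{H})$ be a chart for $G$, let $0<\epsilon<1$, let $A\subseteq\mathbb{Z}^\ell\times\Gamma$ be a centered rectangle, and let $E$ be a $(\Phi,A,\epsilon)$-rectangular equivalence relation on $X$. Let $U$ be an $E$-class meeting $X^{\mathcal{H}}$, let $y\in X^{\mathcal{H}}$, and let $M>0$ with $M\le 2^{22\ell}-8$ be such that $\phi(M\cdot A)\cdot y$ meets $U$. Then there are $v\in\mathrm{dom}(\phi)$, a rectangle $B\subseteq\mathbb{Z}^\ell\times\Gamma$ and $\delta>0$ such that $\phi(v)\cdot y\in X^{\mathcal{H}}$, $U$ is $(\Phi,\delta)$-roughly $B$ at $\phi(v)\cdot y$, $A\sqsubseteq B$, $2\delta\cdot B\sqsubseteq\epsilon\cdot A$, and $2^{22\ell}\cdot B\subseteq\mathrm{dom}(\phi)$. Moreover $U$ is $(\Phi,2\delta)$-roughly $B+v$ at $y$.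
   Context: Rectangles: Let $\Gamma$ be a finite additive abelian group with identity $0_\Gamma$ and $\ell\in\mathbb{N}$. Elements $v$ of $\mathbb{R}^\ell\times\Gamma$ have coordinates $v_1,\dots,v_\ell\in\mathbb{R}$, $v_{\ell+1}\in\Gamma$; $\mathbf{0}$ has first $\ell$ coordinates $0$ and last coordinate $0_\Gamma$. For $\lambda\in\mathbb{R}$, $\lambda\cdot v=(\lambda v_1,\dots,\lambda v_\ell,v_{\ell+1})$. $\mathrm{Rec}(a)=\{b\in\mathbb{Z}^\ell\times\Gamma: -|a_i|\le b_i\le|a_i|,\ 1\le i\le\ell\}$. A rectangle is a set $c+\mathrm{Rec}(a)$ with $c,a\in\mathbb{Z}^\ell\times\Gamma$; it can be written uniquely with $c\in\mathbb{Z}^\ell\times\{0_\Gamma\}$ (center) and $a\in\mathbb{N}^\ell\times\{0_\Gamma\}$ (radius vector $\mathrm{L}(A)$, entries $\mathrm{L}_i(A)$). Centered means center $\mathbf{0}$. $A\sqsubseteq B$ means $\mathrm{L}_i(A)\le\mathrm{L}_i(B)$ for all $i$. For $\lambda>0$, $\lambda\cdot A=c+\mathrm{Rec}(\lambda\cdot\mathrm{L}(A))$ with $c$ the center of $A$. Sums of sets/vectors are elementwise. Charts: a chart for $G$ is $\Phi=(\ell,\phi,\mathcal{Z},\Gamma,\mathcal{H})$ with $\mathcal{H}$ a finite collection of pairwise conjugate subgroups of $G$, $\Gamma$ finite abelian, $\mathcal{Z}$ a centered rectangle with all $\mathrm{L}_i(\mathcal{Z})>0$, $\phi$ an injective map into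 $G$ with $\mathrm{dom}(\phi)$ a centered rectangle containing $3\cdot\mathcal{Z}$, $\phi(\mathbf{0})=1_G$, and for all $r,s\in\mathrm{dom}(\phi)$, $H\in\mathcal{H}$: $\phi(r)H=\phi(s)H\Rightarrow r=s$; $r+s+\mathcal{Z}\subseteq\mathrm{dom}(\phi)\Rightarrow\exists z\in\mathcal{Z}:\phi(r)\phi(s)H=\phi(r+s+z)H$; $r-s+\mathcal{Z}\subseteq\mathrm{dom}(\phi)\Rightarrow\exists z\in\mathcal{Z}:\phi(r)\phi(s)^{-1}H=\phi(r-s+z)H$; $-r+s+\mathcal{Z}\subseteq\mathrm{dom}(\phi)\Rightarrow\exists z\in\mathcal{Z}:\phi(r)^{-1}\phi(s)H=\phi(-r+s+z)H$; $-s+\mathcal{Z}\subseteq\mathrm{dom}(\phi)\Rightarrow\exists z\in\mathcal{Z}:\phi(s)^{-1}H=\phi(-s+z)H$. $\phi(S)\cdot x=\{\phi(s)\cdot x:s\in S\}$. $X^{\mathcal{H}}=\{x\in X:\mathrm{Stab}(x)\in\mathcal{H}\}$. Rough rectangles: for a rectangle $B$ with $2\cdot B\subseteq\mathrm{dom}(\phi)$, $x\in X^{\mathcal{H}}$, $0<\delta<1$, a set $R\subseteq X$ is $(\Phi,\delta)$-roughly $B$ at $x$ if $2\cdot\mathcal{Z}\sqsubseteq\delta\cdot B$ and $\phi((1-\delta)\cdot B)\cdot x\subseteq R\subseteq\phi((1+\delta)\cdot B)\cdot x$. Rectangular: for $A$ centered and $0<\epsilon<1$, an equivalence relation $E$ on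 $X$ is $(\Phi,A,\epsilon)$-rectangular if every $E$-class not meeting $X^{\mathcal{H}}$ is a singleton, and for every $E$-class $U$ meeting $X^{\mathcal{H}}$ there are $\delta>0$, a rectangle $B$ and a point $x\in X^{\mathcal{H}}$ such that $U$ is $(\Phi,\delta)$-roughly $B$ at $x$, with $A\sqsubseteq B$, $2^{22\ell}\cdot B\subseteq\mathrm{dom}(\phi)$, and $2\delta\cdot B\sqsubseteq\epsilon\cdot A$. *)

(* Defs.v *)
From HB Require Import structures.
From mathcomp Require Import all_boot all_order all_algebra.
From mathcomp Require Import reals.

Set Implicit Arguments.
Unset Strict Implicit.
Unset Printing Implicit Defensive.

Import Order.TTheory GRing.Theory Num.Theory.
Local Open Scope ring_scope.

Section GroupDefs.
Variable G : groupType.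
Local Open Scope group_scope.

Definition countable_group : Prop := exists f : G -> nat, injective f.

Definition is_action (X : Type) (act : G -> X -> X) : Prop :=
  (forall x, act 1 x = x) /\ (forall g h x, act (g * h) x = act g (act h x)).

Definition is_subgroup (H : G -> Prop) : Prop :=
  H 1 /\ (forall g h, H g -> H h -> H (g * h)) /\ (forall g, H g -> H g^-1).

Definition conjugate_subgroups (H H' : G -> Prop) : Prop :=
  exists g : G, forall h, H' h <-> H (g^-1 * h * g).

Definition lcoset (g : G) (H : G -> Prop) : G -> Prop :=
  fun k => exists h, H h /\ k = g * h.

Definition Stab (X : Type) (act : G -> X -> X) (x : X) : G -> Prop :=
  fun g => act g x = x.

Definition XH (X : Type) (act : G -> X -> X) (k : nat) (Hs : 'I_k -> G -> Prop)
  (x : X) : Prop := exists j : 'I_k, Stab act x = Hs j.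

End GroupDefs.

(* elements of Z^l x Gamma; coordinate i <= l is v.1 ord0 i, last is v.2 *)
Definition vec (l : nat) (Gam : finZmodType) := ('rV[int]_l * Gam)%type.

Definition set_sub (T : Type) (S1 S2 : T -> Prop) := forall t, S1 t -> S2 t.

(* c + Rec(a) with c in Z^l (Gamma component 0) and a real vector a *)
Definition rectR (R : realType) (l : nat) (Gam : finZmodType)
  (c : 'rV[int]_l) (a : 'I_l -> R) : vec l Gam -> Prop :=
  fun b => forall i : 'I_l,
    - `|a i| <= ((b.1 ord0 i - c ord0 i)%:~R : R) <= `|a i|.

(* A rectangle, in its unique normal form c + Rec(L) with c in Z^l x {0},
   L in N^l x {0}. *)
Record rect (l : nat) := Rect { rcenter : 'rV[int]_l ; rrad : 'I_l -> nat }.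

Definition rset (R : realType) (l : nat) (Gam : finZmodType) (B : rect l)
  : vec l Gam -> Prop := @rectR R l Gam (rcenter B) (fun i => ((rrad B i)%:R : R)).

Arguments rset R {l} Gam B.

Definition centered (l : nat) (B : rect l) : Prop := rcenter B = 0.

Definition rle (l : nat) (A B : rect l) : Prop := forall i, (rrad A i <= rrad B i)%N.

(* lambda . B = c + Rec(lambda L(B)); as a rectangle its radius vector is
   the integer part of lambda L(B) (see rscale_set below). *)
Definition rscale (R : realType) (l : nat) (lam : R) (B : rect l) : rect l :=
  Rect (rcenter B) (fun i => Num.truncn (lam * (rrad B i)%:R)).

Definition rtrans (l : nat) (Gam : finZmodType) (B : rect l) (v : vec l Gam) : rect l :=
  Rect (rcenter B + v.1) (rrad B).

Section Charts.
Variables (R : realType) (G : groupType) (l : nat) (Gam : finZmodType).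

(* dom(phi) = rset D; phi is given as a total function whose values
   outside rset D are irrelevant. *)
Definition is_chart (phi : vec l Gam -> G) (Zr D : rect l) (k : nat)
  (Hs : 'I_k -> G -> Prop) : Prop :=
  let dom := rset R Gam D in
  let Zs := rset R Gam Zr in
  [/\ (forall j, is_subgroup (Hs j)) /\
        (forall j j', conjugate_subgroups (Hs j) (Hs j')),
      centered Zr /\ (forall i, (0 < rrad Zr i)%N),
      centered D /\ set_sub (rset R Gam (rscale (3%:R : R) Zr)) dom,
      phi 0 = 1%g &
      (forall r s, dom r -> dom s -> phi r = phi s -> r = s) /\
      (forall r s j, dom r -> dom s ->
        [/\ (lcoset (phi r) (Hs j) = lcoset (phi s) (Hs j) -> r = s),
            (set_sub (fun t => exists2 z, Zs z & t = (r + s + z)) dom ->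
              exists2 z, Zs z &
                lcoset (phi r * phi s)%g (Hs j) = lcoset (phi (r + s + z)) (Hs j)),
            (set_sub (fun t => exists2 z, Zs z & t = (r - s + z)) dom ->
              exists2 z, Zs z &
                lcoset (phi r * (phi s)^-1)%g (Hs j) = lcoset (phi (r - s + z)) (Hs j)),
            (set_sub (fun t => exists2 z, Zs z & t = (- r + s + z)) dom ->
              exists2 z, Zs z &
                lcoset ((phi r)^-1 * phi s)%g (Hs j) = lcoset (phi (- r + s + z)) (Hs j)) &
            (set_sub (fun t => exists2 z, Zs z & t = (- s + z)) dom ->
              exists2 z, Zs z &
                lcoset ((phi s)^-1)%g (Hs j) = lcoset (phi (- s + z)) (Hs j))])].

(* phi(S) . x  (only points of dom(phi) are mapped) *)
Definition phi_img (X : Type) (act : G -> X -> X) (phi : vec l Gam -> G)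
  (D : rect l) (S : vec l Gam -> Prop) (x : X) : X -> Prop :=
  fun p => exists s, [/\ S s, rset R Gam D s & p = act (phi s) x].

(* R0 is (Phi, delta)-roughly B at x, including the standing requirements
   2.B ⊆ dom(phi), x ∈ X^H, 0 < delta < 1 of the definition. *)
Definition roughly (X : Type) (act : G -> X -> X) (phi : vec l Gam -> G)
  (Zr D : rect l) (k : nat) (Hs : 'I_k -> G -> Prop)
  (delta : R) (B : rect l) (x : X) (R0 : X -> Prop) : Prop :=
  [/\ set_sub (rset R Gam (rscale (2%:R : R) B)) (rset R Gam D),
      XH act Hs x, 0 < delta < 1,
      rle (rscale (2%:R : R) Zr) (rscale delta B) &
      set_sub (phi_img act phi D (rset R Gam (rscale (1 - delta) B)) x) R0 /\
      set_sub R0 (phi_img act phi D (rset R Gam (rscale (1 + delta) B)) x)].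

Definition is_equiv (X : Type) (E : X -> X -> Prop) : Prop :=
  (forall x, E x x) /\ (forall x y, E x y -> E y x) /\
  (forall x y z, E x y -> E y z -> E x z).

Definition is_class (X : Type) (E : X -> X -> Prop) (U : X -> Prop) : Prop :=
  exists x, U = E x.

Definition meets (X : Type) (S T : X -> Prop) : Prop := exists x, S x /\ T x.

Definition rectangular (X : Type) (act : G -> X -> X) (phi : vec l Gam -> G)
  (Zr D : rect l) (k : nat) (Hs : 'I_k -> G -> Prop)
  (A : rect l) (eps : R) (E : X -> X -> Prop) : Prop :=
  is_equiv E /\
  (forall U, is_class E U -> ~ meets U (XH act Hs) ->
     exists x, U = (fun y => y = x)) /\
  (forall U, is_class E U -> meets U (XH act Hs) ->
     exists delta : R, exists B : rect l, exists x : X,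
       [/\ 0 < delta /\ XH act Hs x, roughly act phi Zr D Hs delta B x U,
           rle A B,
           set_sub (rset R Gam (rscale ((2%:R : R) ^+ (22 * l)) B)) (rset R Gam D) &
           rle (rscale (2%:R * delta) B) (rscale eps A)]).

End Charts.

(* Main.v *)
Require Import Defs.
From HB Require Import structures.
From mathcomp Require Import all_boot all_order all_algebra.
From mathcomp Require Import reals.
From mathcomp Require Import zify ring lra.
Import Order.TTheory GRing.Theory Num.Theory.
Local Open Scope ring_scope.

Section Helpers.
Variable R : realType.

Lemma intR_bnd (x : int) (n : nat) :
  (-(n%:R : R) <= (x%:~R : R) <= (n%:R : R)) = (- (n%:Z) <= x <= n%:Z).
Proof.
have -> : (n%:R : R) = (n%:Z)%:~R by rewrite -pmulrn.
by rewrite -mulrNz !ler_int.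
Qed.

Lemma rsetP (l : nat) (Gam : finZmodType) (B : rect l) (p : vec l Gam) :
  rset R Gam B p <-> forall i, - ((rrad B i)%:Z) <= p.1 ord0 i - rcenter B ord0 i <= (rrad B i)%:Z.
Proof.
rewrite /rset /rectR; split=> h i; move: (h i); by rewrite normr_nat intR_bnd.
Qed.

Lemma tr_add (x y : R) : 0 <= x -> 0 <= y -> (Num.truncn x + Num.truncn y <= Num.truncn (x + y))%N.
Proof.
move=> hx hy; rewrite truncn_ge_nat ?addr_ge0 // natrD.
by apply: lerD; rewrite truncn_le.
Qed.

Lemma tr_nat (n : nat) : Num.truncn (n%:R : R) = n.
Proof. exact: natrK. Qed.

Lemma tr2 (n : nat) : Num.truncn ((2%:R : R) * n%:R) = (2 * n)%N.
Proof. by rewrite -natrM natrK. Qed.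

Lemma dom_bnd (l : nat) (Gam : finZmodType) (B D : rect l) :
  centered D -> set_sub (rset R Gam B) (rset R Gam D) ->
  forall i, - ((rrad D i)%:Z) <= rcenter B ord0 i - (rrad B i)%:Z /\
            rcenter B ord0 i + (rrad B i)%:Z <= (rrad D i)%:Z.
Proof.
move=> hD hs i.
have hq (sg : int) : sg = 1 \/ sg = -1 ->
   - ((rrad D i)%:Z) <= rcenter B ord0 i + sg * (rrad B i)%:Z <= (rrad D i)%:Z.
  move=> hsg.
  have hsg' : -1 <= sg <= 1 by case: hsg => ->.
  pose q : vec l Gam := (\row_j (rcenter B ord0 j + (if j == i then sg * (rrad B i)%:Z else 0)), 0).
  have : rset R Gam D q.
    apply: hs; apply/rsetP => j; rewrite /q /= mxE.
    case: eqP => [->|_]; last lia.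
    case: hsg => ->; lia.
  move/rsetP=> /(_ i); rewrite /q /= mxE eqxx hD mxE subr0 //.
split.
- by move: (hq (-1) (or_intror erefl)); lia.
- by move: (hq 1 (or_introl erefl)); lia.
Qed.

Lemma in_dom (l : nat) (Gam : finZmodType) (D : rect l) (p : vec l Gam) :
  centered D -> (forall i, - ((rrad D i)%:Z) <= p.1 ord0 i /\ p.1 ord0 i <= (rrad D i)%:Z) -> rset R Gam D p.
Proof. move=> hD h; apply/rsetP => i; rewrite hD mxE subr0; by case: (h i) => -> ->. Qed.

Lemma rsetE (l : nat) (Gam : finZmodType) (B : rect l) (p : vec l Gam) :
  rset R Gam B p -> forall i, - ((rrad B i)%:Z) <= p.1 ord0 i - rcenter B ord0 i /\ p.1 ord0 i - rcenter B ord0 i <= (rrad B i)%:Z.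
Proof. by move/rsetP=> h i; case/andP: (h i). Qed.

Lemma rsetI (l : nat) (Gam : finZmodType) (B : rect l) (p : vec l Gam) :
  (forall i, - ((rrad B i)%:Z) <= p.1 ord0 i - rcenter B ord0 i /\ p.1 ord0 i - rcenter B ord0 i <= (rrad B i)%:Z) -> rset R Gam B p.
Proof. by move=> h; apply/rsetP => i; case: (h i) => -> ->. Qed.

End Helpers.

Lemma coset_act (G : groupType) X (act : G -> X -> X) (hact : is_action act)
  (H : G -> Prop) y a b :
  H 1%g -> (forall h, H h -> act h y = y) -> lcoset a H = lcoset b H -> act a y = act b y.
Proof.
move=> h1 hH e. have: lcoset a H a by exists 1%g; rewrite mulg1.
by rewrite e => -[h [Hh ->]]; rewrite hact.2 hH.
Qed.
Arguments rsetE {R l Gam B p}.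
Arguments rsetI {R l Gam B p}.
Arguments dom_bnd {R l Gam B D}.
Arguments in_dom {R l Gam D p}.
Arguments tr2 {R}.
Arguments coset_act {G X act} hact {H y a b}.

Ltac fin := repeat match goal with |- context [@Num.truncn ?Ty ?x] => let N := fresh "N" in move: (@Num.truncn Ty x) => N end;
  repeat match goal with |- context [@fun_of_matrix ?Ty ?m ?n ?Mx ?a ?b] => let N := fresh "I" in move: (@fun_of_matrix Ty m n Mx a b) => N end; lia.

Theorem lemma5p4
  (R : realType) (G : groupType) (X : Type) (act : G -> X -> X)
  (hG : countable_group G) (hact : is_action act)
  (l : nat) (Gam : finZmodType) (phi : vec l Gam -> G) (Zr D : rect l)
  (k : nat) (Hs : 'I_k -> G -> Prop)
  (hchart : is_chart R phi Zr D Hs)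
  (eps : R) (heps : 0 < eps < 1)
  (A : rect l) (hA : centered A)
  (E : X -> X -> Prop) (hE : rectangular act phi Zr D Hs A eps E)
  (U : X -> Prop) (hU : is_class E U) (hUX : meets U (XH act Hs))
  (y : X) (hy : XH act Hs y)
  (M : R) (hM : 0 < M) (hM2 : M <= (2%:R : R) ^+ (22 * l) - 8%:R)
  (hMA : meets (phi_img R act phi D (rset R Gam (rscale M A)) y) U) :
  exists (v : vec l Gam) (B : rect l) (delta : R),
    [/\ rset R Gam D v /\ 0 < delta,
        XH act Hs (act (phi v) y) /\
        roughly act phi Zr D Hs delta B (act (phi v) y) U,
        rle A B /\
        rle (rscale (2%:R * delta) B) (rscale eps A),
        set_sub (rset R Gam (rscale ((2%:R : R) ^+ (22 * l)) B)) (rset R Gam D) &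
        roughly act phi Zr D Hs (2%:R * delta) (rtrans B v) y U].
Proof.
case: hE => _ [_ hEc].
have [delta [B [x [[hd0 hx] hrough hAB hBD hBA]]]] := hEc U hU hUX.
have hrough' := hrough.
case: hrough' => h2B _ /andP[_ hd1] hZB [hin hout].
case: hMA => p [[s [hsMA hsD ->]] hpU].
have [t [htB htD hst]] := hout _ hpU.
case: hy => j hj. case: (hx) => j' hj'.
move: hchart; rewrite /is_chart /= => -[[hsub _] [hZc hZpos] [hDc _] _ [_ hax]].
have hl : (0 < l)%N.
  rewrite lt0n; apply/negP => /eqP l0; move: hM2; rewrite l0 muln0 expr0 => h; lra.
have hP8 : (0 : R) <= (2%:R : R) ^+ (22 * l) - 8%:R by lra.
pose i0 := Ordinal hl.
have hd2 : 2%:R * delta < 1.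
  have z2 := hZB i0; rewrite /= tr2 in z2.
  have ba := hBA i0; rewrite /= in ba.
  have ab := hAB i0. have zp := hZpos i0.
  set L := rrad B i0 in z2 ba ab *. set a := rrad A i0 in ba ab.
  have hL0 : (0 : R) <= L%:R by rewrite ler0n.
  have ha0 : (0 : R) <= a%:R by rewrite ler0n.
  have m1 : (Num.truncn (delta * L%:R) <= Num.truncn (2%:R * delta * L%:R))%N.
    apply: le_truncn; nra.
  have m2 : (Num.truncn (eps * a%:R) < a)%N.
    case: (posnP a) => a0.
      move: ba; rewrite a0 mulr0 truncn0; lia.
    rewrite truncn_lt_nat; last nra.
    have : (0 : R) < a%:R by rewrite ltr0n.
    case/andP: heps => e0 e1; nra.
  have m3 : (Num.truncn (2%:R * delta * L%:R) < L)%N by lia.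
  rewrite truncn_lt_nat in m3; last nra.
  have : (0 : R) < L%:R by rewrite ltr0n; lia.
  nra.
have F : forall i,
  [/\ (rrad (rscale (1 + delta) B) i <= 2 * rrad B i)%N,
      (rrad (rscale M A) i + 8 * rrad B i <= rrad (rscale ((2%:R : R) ^+ (22 * l)) B) i)%N,
      (2 * rrad Zr i <= rrad (rscale delta B) i)%N /\ (rrad (rscale delta B) i <= rrad (rscale (2%:R * delta) B) i)%N,
      (rrad (rscale delta B) i <= rrad B i)%N /\ (rrad (rscale (1 - delta) B) i <= 2 * rrad B i)%N &
      (rrad (rscale (1 - 2%:R * delta) B) i + rrad (rscale delta B) i <= rrad (rscale (1 - delta) B) i)%N /\
      (rrad (rscale (1 + delta) B) i + rrad (rscale delta B) i <= rrad (rscale (1 + 2%:R * delta) B) i)%N].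
  move=> i /=.
  have z2 := hZB i; rewrite /= tr2 in z2.
  have ab := hAB i.
  set L := rrad B i in z2 ab *. set a := rrad A i in ab *.
  have hL0 : (0 : R) <= L%:R by rewrite ler0n.
  have ha0 : (0 : R) <= a%:R by rewrite ler0n.
  have abR : (a%:R : R) <= L%:R by rewrite ler_nat.
  have h2L : Num.truncn ((2%:R : R) * L%:R) = (2 * L)%N by rewrite tr2.
  split.
  - rewrite -h2L; apply: le_truncn; nra.
  - rewrite truncn_ge_nat; last by apply: mulr_ge0 => //; apply: exprn_ge0; rewrite ler0n.
    rewrite natrD natrM.
    have hMa : 0 <= M * a%:R by apply: mulr_ge0 => //; exact: ltW.
    have ht : (Num.truncn (M * a%:R))%:R <= M * a%:R by rewrite truncn_le.
    have e1 : M * a%:R <= ((2%:R : R) ^+ (22 * l) - 8%:R) * a%:R by apply: ler_wpM2r.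
    have e2 : ((2%:R : R) ^+ (22 * l) - 8%:R) * a%:R <= ((2%:R : R) ^+ (22 * l) - 8%:R) * L%:R by apply: ler_wpM2l.
    move: e1 e2 ht; set P := (2%:R : R) ^+ (22 * l); move=> e1 e2 ht.
    nra.
  - split => //; apply: le_truncn; nra.
  - split.
      rewrite -[X in (_ <= X)%N](tr_nat R); apply: le_truncn; nra.
    rewrite -h2L; apply: le_truncn; nra.
  - split.
    have -> : (1 - delta) * (L%:R : R) = (1 - 2%:R * delta) * L%:R + delta * L%:R by ring.
    apply: tr_add; nra.
    have -> : (1 + 2%:R * delta) * (L%:R : R) = (1 + delta) * L%:R + delta * L%:R by ring.
    apply: tr_add; nra.

have hHj : forall h, Hs j h -> act h y = y by move=> h; rewrite -hj.
have hHj' : forall h, Hs j' h -> act h x = x by move=> h; rewrite -hj'.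
have ht' := rsetE htB. have hs' := rsetE hsMA.
have dB := dom_bnd hDc hBD.
have hcont0 : set_sub (fun u => exists2 z, rset R Gam Zr z & u = - t + s + z) (rset R Gam D).
  move=> u [z' hz' ->]; apply: in_dom hDc _ => i.
  move: (F i) => /= -[f1 f2 [f3 f3'] [f4 f4'] [f5 f5']].
  move: (dB i) (ht' i) (hs' i) (rsetE hz' i); rewrite /= hA hZc !mxE; move: f1 f2 f3 f3' f4 f4' f5 f5'; fin.
case: (hax t s j htD hsD) => _ _ _ /(_ hcont0) [z hz hcos] _.
have hvD : rset R Gam D (- t + s + z) := hcont0 _ (ex_intro2 _ _ z hz erefl).
have hxv : act (phi (- t + s + z)) y = x.
  rewrite -(coset_act hact (hsub j).1 hHj hcos) hact.2 hst -hact.2 mulVg.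
  exact: hact.1.
have hz' := rsetE hz.
set v := - t + s + z in hvD hxv *.
have hv : forall i, v.1 ord0 i = - t.1 ord0 i + s.1 ord0 i + z.1 ord0 i.
  by move=> i; rewrite /v /= !mxE.
clearbody v.
exists v, B, delta; split.
- by split.
- by rewrite hxv; split.
- by split.
- exact: hBD.
split.
- move=> q /rsetE hq; apply: in_dom hDc _ => i.
  move: (F i) => /= -[f1 f2 [f3 f3'] [f4 f4'] [f5 f5']].
  move: (dB i) (ht' i) (hs' i) (hz' i) (hv i) (hq i); rewrite /= hA hZc tr2 !mxE; move: f1 f2 f3 f3' f4 f4' f5 f5'; fin.
- by exists j.
- apply/andP; split; lra.
- move=> i /=; rewrite tr2; move: (F i) => /= -[f1 f2 [f3 f3'] [f4 f4'] [f5 f5']]; lia.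
split.
- move=> q [w [/rsetE hw hwD ->]].
  have hcont : set_sub (fun u => exists2 z, rset R Gam Zr z & u = w - v + z) (rset R Gam D).
    move=> u [z' hz'' ->]; apply: in_dom hDc _ => i.
    move: (F i) => /= -[f1 f2 [f3 f3'] [f4 f4'] [f5 f5']].
    move: (dB i) (ht' i) (hs' i) (hz' i) (hv i) (hw i) (rsetE hz'' i); rewrite /= hA hZc !mxE; move: f1 f2 f3 f3' f4 f4' f5 f5'; fin.
  case: (hax w v j' hwD hvD) => _ _ /(_ hcont) [z2 hz2 hcos2] _ _.
  apply: hin; exists (w - v + z2); split.
  + apply: rsetI => i.
    move: (F i) => /= -[f1 f2 [f3 f3'] [f4 f4'] [f5 f5']].
    move: (dB i) (ht' i) (hs' i) (hz' i) (hv i) (hw i) (rsetE hz2 i); rewrite /= hA hZc !mxE; move: f1 f2 f3 f3' f4 f4' f5 f5'; fin.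
  + exact: hcont _ (ex_intro2 _ _ z2 hz2 erefl).
  + rewrite -(coset_act hact (hsub j').1 hHj' hcos2) -hxv -hact.2 mulgVK //.
- move=> q hq; case: (hout q hq) => t' [/rsetE ht'B ht'D ->].
  have hcont3 : set_sub (fun u => exists2 z, rset R Gam Zr z & u = t' + v + z) (rset R Gam D).
    move=> u [z' hz'' ->]; apply: in_dom hDc _ => i.
    move: (F i) => /= -[f1 f2 [f3 f3'] [f4 f4'] [f5 f5']].
    move: (dB i) (ht' i) (hs' i) (hz' i) (hv i) (ht'B i) (rsetE hz'' i); rewrite /= hA hZc !mxE; move: f1 f2 f3 f3' f4 f4' f5 f5'; fin.
  case: (hax t' v j ht'D hvD) => _ /(_ hcont3) [z3 hz3 hcos3] _ _ _.
  exists (t' + v + z3); split.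
  + apply: rsetI => i.
    move: (F i) => /= -[f1 f2 [f3 f3'] [f4 f4'] [f5 f5']].
    move: (dB i) (ht' i) (hs' i) (hz' i) (hv i) (ht'B i) (rsetE hz3 i); rewrite /= hA hZc !mxE; move: f1 f2 f3 f3' f4 f4' f5 f5'; fin.
  + exact: hcont3 _ (ex_intro2 _ _ z3 hz3 erefl).
  + by rewrite -(coset_act hact (hsub j).1 hHj hcos3) hact.2 hxv.
Qed.
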